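(* Assume $0<a,b<1$, $r>2$, $s>2$, $r>as$, $s>br$, and let $\alpha\in(\tilde\alpha,1)$, $\beta\in(\tilde\beta,1)$. (a) $T_{\alpha,\beta}$ maps $D_{\alpha,\beta}$ into $D_{\alpha,\beta}$, and for every $h\in(0,\min\{\underline c_1(\alpha,\beta),\underline c_2(\alpha,\beta)\})$ it maps $D_{\alpha,\beta}(h)$ into $D_{\alpha,\beta}(h)$. (b) If $1>\tilde\alpha_1\ge\tilde\alpha_2>\tilde\alpha$ and $1>\tilde\beta_1\ge\tilde\beta_2>\tilde\beta$, then $T_{\tilde\alpha_1,\tilde\beta_1}$ maps $D_{\tilde\alpha_2,\tilde\beta_2}$ into $D_{\tilde\alpha_2,\tilde\beta_2}$, and maps $D_{\tilde\alpha_2,\tilde\beta_2}(h)$ into $D_{\tilde\alpha_2,\tilde\beta_2}(h)$ for every $h\in(0,\min\{\underline c_1(\tilde\alpha_2,\tilde\beta_2),\underline c_2(\tilde\alpha_2,\tilde\beta_2)\})$.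
   Context: Let $f(\alpha,x,y)=x[(1-\alpha)e^{r-x-ay}+\alpha]$, $g(\beta,x,y)=y[(1-\beta)e^{s-bx-y}+\beta]$, $T_{\alpha,\beta}(x,y)=(f(\alpha,x,y),g(\beta,x,y))$. Define $\mathcal H_1(\alpha)=\max\{(1-\alpha)e^{r-1}+2\alpha,\,r\}$, $\mathcal H_2(\beta)=\max\{(1-\beta)e^{s-1}+2\beta,\,s\}$, $c_1(\beta)=r-a\mathcal H_2(\beta)$, $c_2(\alpha)=s-b\mathcal H_1(\alpha)$, $\tilde\alpha=\max\{\frac{e^{r-1}-s/b}{e^{r-1}-2},0\}$, $\tilde\beta=\max\{\frac{e^{s-1}-r/a}{e^{s-1}-2},0\}$. For $\alpha\in(\tilde\alpha,1)$, $\beta\in(\tilde\beta,1)$: $\underline c_1(\alpha,\beta)=\min\{f(\alpha,x,y):x\in[c_1(\beta),\mathcal H_1(\alpha)],y\in[0,\mathcal H_2(\beta)]\}$, $\underline c_2(\alpha,\beta)=\min\{g(\beta,x,y):x\in[0,\mathcal H_1(\alpha)],y\in[c_2(\alpha),\mathcal H_2(\beta)]\}$ (both are positive), $D_{\alpha,\beta}=[\underline c_1(\alpha,\beta),\mathcal H_1(\alpha)]\times[\underline c_2(\alpha,\beta),\mathcal H_2(\beta)]$ and, for $h\in(0,\min\{\underline c_1(\alpha,\beta),\underline c_2(\alpha,\beta)\})$, $D_{\alpha,\beta}(h)=[\underline c_1(\alpha,\beta)-h,\mathcal H_1(\alpha)]\times[\underline c_2(\alpha,\beta)-h,\mathcal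 H_2(\beta)]$. *)

(* Defs.v *)
From Stdlib Require Import Reals Lra ClassicalEpsilon.
Open Scope R_scope.

Definition f (r a alpha x y : R) : R :=
  x * ((1 - alpha) * exp (r - x - a * y) + alpha).
Definition g (s b beta x y : R) : R :=
  y * ((1 - beta) * exp (s - b * x - y) + beta).
Definition T (r s a b alpha beta : R) (p : R * R) : R * R :=
  (f r a alpha (fst p) (snd p), g s b beta (fst p) (snd p)).

Definition H1 (r alpha : R) : R := Rmax ((1 - alpha) * exp (r - 1) + 2 * alpha) r.
Definition H2 (s beta : R) : R := Rmax ((1 - beta) * exp (s - 1) + 2 * beta) s.
Definition c1 (r s a beta : R) : R := r - a * H2 s beta.
Definition c2 (r s b alpha : R) : R := s - b * H1 r alpha.
Definition alpha_tilde (r s b : R) : R :=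
  Rmax ((exp (r - 1) - s / b) / (exp (r - 1) - 2)) 0.
Definition beta_tilde (r s a : R) : R :=
  Rmax ((exp (s - 1) - r / a) / (exp (s - 1) - 2)) 0.

Definition IsMinOn (F : R -> R -> R) (x0 x1 y0 y1 m : R) : Prop :=
  (exists x y, x0 <= x <= x1 /\ y0 <= y <= y1 /\ F x y = m) /\
  (forall x y, x0 <= x <= x1 -> y0 <= y <= y1 -> m <= F x y).
Definition minOn (F : R -> R -> R) (x0 x1 y0 y1 : R) : R :=
  epsilon (inhabits 0) (fun m => IsMinOn F x0 x1 y0 y1 m).

Definition cl1 (r s a b alpha beta : R) : R :=
  minOn (f r a alpha) (c1 r s a beta) (H1 r alpha) 0 (H2 s beta).
Definition cl2 (r s a b alpha beta : R) : R :=
  minOn (g s b beta) 0 (H1 r alpha) (c2 r s b alpha) (H2 s beta).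

Definition D (r s a b alpha beta : R) (p : R * R) : Prop :=
  cl1 r s a b alpha beta <= fst p <= H1 r alpha /\
  cl2 r s a b alpha beta <= snd p <= H2 s beta.
Definition Dh (r s a b alpha beta h : R) (p : R * R) : Prop :=
  cl1 r s a b alpha beta - h <= fst p <= H1 r alpha /\
  cl2 r s a b alpha beta - h <= snd p <= H2 s beta.

(* Main.v *)
Require Import Defs.
From Stdlib Require Import Reals Lra ClassicalEpsilon FunctionalExtensionality.
From Coquelicot Require Import Coquelicot.
Import Defs.
Open Scope R_scope.

Lemma exp_le_mono x y : x <= y -> exp x <= exp y.
Proof. intros H; destruct (Req_dec x y) as [->|]; [lra|]. left; apply exp_increasing; lra. Qed.

Lemma exp_1_gt2 : 2 < exp 1.
Proof. pose proof (exp_ineq1 1). lra. Qed.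

Definition phi (r al x : R) := x * ((1 - al) * exp (r - x) + al).
Definition dphi (r al x : R) := (1 - al) * (1 - x) * exp (r - x) + al.

Lemma phi_der r al x : derivable_pt_lim (phi r al) x (dphi r al x).
Proof.
  apply is_derive_Reals. unfold phi, dphi. auto_derive. auto.
  unfold Rminus. ring.
Qed.

Lemma d_incr r x y : 2 <= x -> x <= y ->
  (1 - x) * exp (r - x) <= (1 - y) * exp (r - y).
Proof.
  intros Hx Hxy.
  replace (r - x) with ((r - y) + (y - x)) by ring. rewrite exp_plus.
  pose proof (exp_ineq1_le (y - x)). pose proof (exp_pos (r - y)).
  assert ((1 - x) * exp (y - x) <= 1 - y) by nra. nra.
Qed.

Lemma phi_bound r al x : r > 2 -> 0 <= al < 1 -> 0 <= x <= r ->
  phi r al x <= H1 r al.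
Proof.
  intros Hr Hal Hx. unfold H1.
  assert (Hphi2 : phi r al 2 <= (1 - al) * exp (r - 1) + 2 * al).
  { unfold phi. replace (r - 1) with ((r - 2) + 1) by ring. rewrite exp_plus.
    pose proof exp_1_gt2. pose proof (exp_pos (r - 2)).
    assert (0 <= (1 - al) * exp (r - 2) * (exp 1 - 2)).
    { apply Rmult_le_pos; [apply Rmult_le_pos|]; lra. }
    nra. }
  assert (Hphir : phi r al r = r).
  { unfold phi. replace (r - r) with 0 by ring. rewrite exp_0. ring. }
  destruct (Rle_lt_dec x 2) as [Hx2|Hx2].
  - eapply Rle_trans; [|apply Rmax_l]. unfold phi.
    assert (x * exp (r - x) <= exp (r - 1)).
    { replace (r - 1) with ((r - x) + (x - 1)) by ring. rewrite exp_plus.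
      pose proof (exp_ineq1_le (x - 1)). pose proof (exp_pos (r - x)). nra. }
    nra.
  - destruct (Rle_lt_dec 0 (dphi r al x)) as [Hd|Hd].
    + eapply Rle_trans; [|apply Rmax_r].
      destruct (Req_dec x r) as [->|Hne]; [lra|].
      destruct (MVT_cor2 (phi r al) (dphi r al) x r) as [c [Hc1 Hc2]]; [lra|intros; apply phi_der|].
      assert (dphi r al x <= dphi r al c).
      { unfold dphi. pose proof (d_incr r x c). nra. }
      nra.
    + eapply Rle_trans; [|apply Rmax_l].
      destruct (MVT_cor2 (phi r al) (dphi r al) 2 x) as [c [Hc1 Hc2]]; [lra|intros; apply phi_der|].
      assert (dphi r al c <= dphi r al x).
      { unfold dphi. pose proof (d_incr r c x). nra. }
      nra.
Qed.

Lemma f_alpha_cmp r a al1 al2 x y : 0 <= x -> al2 <= al1 ->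
  (1 <= exp (r - x - a * y) -> f r a al1 x y <= f r a al2 x y) /\
  (exp (r - x - a * y) <= 1 -> f r a al2 x y <= f r a al1 x y).
Proof.
  intros Hx Ha; unfold f; set (E := exp (r - x - a * y)); split; intros HE.
  - assert (0 <= x * ((al1 - al2) * (E - 1))) by (apply Rmult_le_pos; [|apply Rmult_le_pos]; lra). nra.
  - assert (0 <= x * ((al1 - al2) * (1 - E))) by (apply Rmult_le_pos; [|apply Rmult_le_pos]; lra). nra.
Qed.

Lemma upper r a al1 al2 x y : r > 2 -> 0 < a -> 0 <= al2 -> al2 <= al1 -> al1 < 1 ->
  0 <= x <= H1 r al2 -> 0 <= y -> f r a al1 x y <= H1 r al2.
Proof.
  intros Hr Ha H0 H12 H1l Hx Hy.
  destruct (Rle_lt_dec 1 (exp (r - x - a * y))) as [HE|HE].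
  - destruct (f_alpha_cmp r a al1 al2 x y) as [C _]; try lra.
    eapply Rle_trans; [apply C; lra|].
    assert (Hxr : x <= r).
    { destruct (Rle_lt_dec x r); auto.
      assert (exp (r - x - a * y) < 1); [|lra].
      rewrite <- exp_0. apply exp_increasing. nra. }
    eapply Rle_trans; [|apply (phi_bound r al2 x); lra].
    unfold f, phi. pose proof (exp_le_mono (r - x - a * y) (r - x) ltac:(nra)).
    apply Rmult_le_compat_l; [lra|]. apply Rplus_le_compat_r. apply Rmult_le_compat_l; lra.
  - unfold f. assert ((1 - al1) * exp (r - x - a * y) + al1 <= 1) by nra.
    assert (x * ((1 - al1) * exp (r - x - a * y) + al1) <= x * 1) by (apply Rmult_le_compat_l; lra).
    lra.
Qed.

Lemma lower r a al1 al2 M m L x y : 0 < a -> 0 <= al2 -> al2 <= al1 -> al1 < 1 ->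
  0 < r - a * M -> IsMinOn (f r a al2) (r - a * M) (H1 r al2) 0 M m ->
  0 < L -> L <= m -> L <= x <= H1 r al2 -> 0 <= y <= M -> L <= f r a al1 x y.
Proof.
  intros Ha H0 H12 H1l Hc [[wx [wy [Hwx [Hwy Hw]]]] Hmin] HL HLm Hx Hy.
  assert (Hmc : m <= r - a * M).
  { pose proof (Hmin (r - a * M) M ltac:(lra) ltac:(lra)) as Hm.
    unfold f in Hm. replace (r - (r - a * M) - a * M) with 0 in Hm by ring.
    rewrite exp_0 in Hm. lra. }
  destruct (Rle_lt_dec (r - a * M) x) as [Hxc|Hxc].
  - destruct (Rle_lt_dec 1 (exp (r - x - a * y))) as [HE|HE].
    + unfold f. assert (1 <= (1 - al1) * exp (r - x - a * y) + al1) by nra.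
      assert (x * 1 <= x * ((1 - al1) * exp (r - x - a * y) + al1)) by (apply Rmult_le_compat_l; lra).
      lra.
    + destruct (f_alpha_cmp r a al1 al2 x y) as [_ C]; try lra.
      pose proof (Hmin x y ltac:(lra) ltac:(lra)). pose proof (C ltac:(lra)). lra.
  - assert (1 < exp (r - x - a * y)).
    { rewrite <- exp_0. apply exp_increasing. nra. }
    unfold f. assert (1 <= (1 - al1) * exp (r - x - a * y) + al1) by nra.
    assert (x * 1 <= x * ((1 - al1) * exp (r - x - a * y) + al1)) by (apply Rmult_le_compat_l; lra).
    lra.
Qed.

Lemma min_exists r a al M : 0 < a -> 0 <= al < 1 -> 0 <= M -> 0 < r - a * M -> r - a * M <= H1 r al ->
  exists m, IsMinOn (f r a al) (r - a * M) (H1 r al) 0 M m /\ 0 < m.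
Proof.
  intros Ha Hal HM Hc HcH.
  destruct (continuity_ab_min (fun x => f r a al x M) (r - a * M) (H1 r al) HcH) as [xs [Hxs Hb]].
  { intros. unfold f. reg. }
  exists (f r a al xs M). split.
  - split. exists xs, M. split; [lra|split; [lra|reflexivity]].
    intros x y Hx Hy. apply Rle_trans with (f r a al x M); [apply Hxs; lra|].
    unfold f. pose proof (exp_le_mono (r - x - a * M) (r - x - a * y) ltac:(nra)).
    apply Rmult_le_compat_l; [lra|]. apply Rplus_le_compat_r. apply Rmult_le_compat_l; lra.
  - unfold f. pose proof (exp_pos (r - xs - a * M)). apply Rmult_lt_0_compat; [lra|].
    pose proof (Rmult_lt_0_compat (1 - al) _ ltac:(lra) H). lra.
Qed.

Lemma IsMinOn_swap F x0 x1 y0 y1 m :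
  IsMinOn F y0 y1 x0 x1 m -> IsMinOn (fun x y => F y x) x0 x1 y0 y1 m.
Proof.
  intros [[x [y [Hx [Hy He]]]] Hm]. split.
  - exists y, x. auto.
  - intros. apply Hm; auto.
Qed.

Lemma g_f s b be : g s b be = fun x y => f s b be y x.
Proof.
  apply functional_extensionality; intro x. apply functional_extensionality; intro y.
  unfold f, g. replace (s - y - b * x) with (s - b * x - y) by ring. ring.
Qed.

Lemma c_pos r s a be : 0 < a -> s > 2 -> r > a * s ->
  be > Rmax ((exp (s - 1) - r / a) / (exp (s - 1) - 2)) 0 -> 0 < r - a * H2 s be.
Proof.
  intros Ha Hs Hrs Hb.
  assert (He : 2 < exp (s - 1)).
  { pose proof exp_1_gt2. pose proof (exp_le_mono 1 (s - 1) ltac:(lra)). lra. }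
  pose proof (Rmax_l ((exp (s - 1) - r / a) / (exp (s - 1) - 2)) 0).
  assert (Hb2 : exp (s - 1) - r / a < be * (exp (s - 1) - 2)).
  { apply (Rmult_lt_reg_r (/ (exp (s - 1) - 2))). apply Rinv_0_lt_compat; lra.
    rewrite Rmult_assoc, Rinv_r by lra. unfold Rdiv in H. lra. }
  assert (Hra : a * (r / a) = r) by (field; lra).
  unfold H2. unfold Rmax. destruct (Rle_dec _ _).
  - lra.
  - assert ((1 - be) * exp (s - 1) + 2 * be < r / a) by lra.
    assert (a * ((1 - be) * exp (s - 1) + 2 * be) < a * (r / a)) by (apply Rmult_lt_compat_l; lra).
    lra.
Qed.

Lemma H_ge r al : r <= H1 r al.
Proof. unfold H1. apply Rmax_r. Qed.

Lemma general (a b r s : R) :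
  0 < a < 1 -> 0 < b < 1 -> r > 2 -> s > 2 -> r > a * s -> s > b * r ->
  forall alpha1 alpha2 beta1 beta2 : R,
     alpha1 < 1 -> alpha2 <= alpha1 -> alpha2 > alpha_tilde r s b ->
     beta1 < 1 -> beta2 <= beta1 -> beta2 > beta_tilde r s a ->
     (forall p, D r s a b alpha2 beta2 p -> D r s a b alpha2 beta2 (T r s a b alpha1 beta1 p)) /\
     (forall h, 0 < h < Rmin (cl1 r s a b alpha2 beta2) (cl2 r s a b alpha2 beta2) ->
        forall p, Dh r s a b alpha2 beta2 h p ->
          Dh r s a b alpha2 beta2 h (T r s a b alpha1 beta1 p)).
Proof.
  intros Ha Hb Hr Hs Hrs Hsr al1 al2 be1 be2 Ha1 H12 Ha2 Hb1 Hb12 Hb2.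
  assert (Ha20 : 0 <= al2).
  { unfold alpha_tilde in Ha2. pose proof (Rmax_r ((exp (r - 1) - s / b) / (exp (r - 1) - 2)) 0). lra. }
  assert (Hb20 : 0 <= be2).
  { unfold beta_tilde in Hb2. pose proof (Rmax_r ((exp (s - 1) - r / a) / (exp (s - 1) - 2)) 0). lra. }
  assert (Hc1 : 0 < r - a * H2 s be2) by (apply c_pos; unfold beta_tilde in Hb2; lra).
  assert (Hc2 : 0 < s - b * H1 r al2) by (apply (c_pos s r b al2); unfold alpha_tilde in Ha2; lra).
  pose proof (H_ge r al2). pose proof (H_ge s be2).
  assert (HH1 : H1 r al2 = H2 r al2) by reflexivity.
  assert (HH2 : H2 s be2 = H1 s be2) by reflexivity.
  assert (S1 : IsMinOn (f r a al2) (r - a * H2 s be2) (H1 r al2) 0 (H2 s be2) (cl1 r s a b al2 be2)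
               /\ 0 < cl1 r s a b al2 be2).
  { destruct (min_exists r a al2 (H2 s be2) ltac:(lra) ltac:(lra) ltac:(lra) ltac:(lra) ltac:(nra)) as [m [Hm Hp]].
    unfold cl1, minOn, c1.
    pose proof (epsilon_spec (inhabits 0) (fun m => IsMinOn (f r a al2) (r - a * H2 s be2) (H1 r al2) 0 (H2 s be2) m) (ex_intro _ m Hm)) as Hs'.
    split; auto.
    destruct Hs' as [[wx [wy [Hwx [Hwy Hw]]]] _]. rewrite <- Hw. unfold f.
    pose proof (exp_pos (r - wx - a * wy)). apply Rmult_lt_0_compat; [lra|].
    pose proof (Rmult_lt_0_compat (1 - al2) _ ltac:(lra) H1). lra. }
  assert (S2 : IsMinOn (f s b be2) (s - b * H1 r al2) (H1 s be2) 0 (H1 r al2) (cl2 r s a b al2 be2)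
               /\ 0 < cl2 r s a b al2 be2).
  { destruct (min_exists s b be2 (H1 r al2) ltac:(lra) ltac:(lra) ltac:(lra) ltac:(lra) ltac:(nra)) as [m [Hm Hp]].
    assert (Hm' : exists m, IsMinOn (g s b be2) 0 (H1 r al2) (s - b * H1 r al2) (H2 s be2) m).
    { exists m. rewrite g_f. apply IsMinOn_swap. exact Hm. }
    pose proof (epsilon_spec (inhabits 0) _ Hm') as Hs'.
    assert (Hq : IsMinOn (g s b be2) 0 (H1 r al2) (s - b * H1 r al2) (H2 s be2) (cl2 r s a b al2 be2)) by exact Hs'.
    clear Hs'. rename Hq into Hs'.
    rewrite g_f in Hs'. destruct Hs' as [[wx [wy [Hwx [Hwy Hw]]]] Hmin].
    cbv beta in Hw, Hmin. split.
    - split. exists wy, wx. split; [lra|split; [lra|exact Hw]]. intros x y Hx Hy. apply Hmin; lra.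
    - rewrite <- Hw. unfold f. pose proof (exp_pos (s - wy - b * wx)) as Hep. apply Rmult_lt_0_compat; [lra|].
      pose proof (Rmult_lt_0_compat (1 - be2) _ ltac:(lra) Hep). lra. }
  destruct S1 as [M1 P1]. destruct S2 as [M2 P2].
  assert (KEY : forall L1 L2 p, 0 < L1 <= cl1 r s a b al2 be2 -> 0 < L2 <= cl2 r s a b al2 be2 ->
     L1 <= fst p <= H1 r al2 -> L2 <= snd p <= H2 s be2 ->
     (L1 <= fst (T r s a b al1 be1 p) <= H1 r al2) /\ (L2 <= snd (T r s a b al1 be1 p) <= H2 s be2)).
  { intros L1 L2 [x y] HL1 HL2 Hx Hy; simpl in *. split; split.
    - apply (lower r a al1 al2 (H2 s be2) (cl1 r s a b al2 be2)); auto; lra.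
    - apply upper; lra.
    - rewrite g_f. apply (lower s b be1 be2 (H1 r al2) (cl2 r s a b al2 be2)); auto; lra.
    - rewrite g_f. rewrite HH2. apply upper; lra. }
  split.
  - intros p [Hx Hy]. apply KEY; auto; lra.
  - intros h Hh p [Hx Hy].
    pose proof (Rmin_l (cl1 r s a b al2 be2) (cl2 r s a b al2 be2)).
    pose proof (Rmin_r (cl1 r s a b al2 be2) (cl2 r s a b al2 be2)).
    apply KEY; auto; lra.
Qed.

Theorem mainTheorem3 (a b r s : R) :
  0 < a < 1 -> 0 < b < 1 -> r > 2 -> s > 2 -> r > a * s -> s > b * r ->
  (forall alpha beta : R,
     alpha_tilde r s b < alpha < 1 -> beta_tilde r s a < beta < 1 ->
     (forall p, D r s a b alpha beta p -> D r s a b alpha beta (T r s a b alpha beta p)) /\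
     (forall h, 0 < h < Rmin (cl1 r s a b alpha beta) (cl2 r s a b alpha beta) ->
        forall p, Dh r s a b alpha beta h p ->
          Dh r s a b alpha beta h (T r s a b alpha beta p))) /\
  (forall alpha1 alpha2 beta1 beta2 : R,
     alpha1 < 1 -> alpha2 <= alpha1 -> alpha2 > alpha_tilde r s b ->
     beta1 < 1 -> beta2 <= beta1 -> beta2 > beta_tilde r s a ->
     (forall p, D r s a b alpha2 beta2 p -> D r s a b alpha2 beta2 (T r s a b alpha1 beta1 p)) /\
     (forall h, 0 < h < Rmin (cl1 r s a b alpha2 beta2) (cl2 r s a b alpha2 beta2) ->
        forall p, Dh r s a b alpha2 beta2 h p ->
          Dh r s a b alpha2 beta2 h (T r s a b alpha1 beta1 p))).
Proof.
  intros. split.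
  - intros al be Hal Hbe. apply general; auto; lra.
  - apply general; auto.
Qed.
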